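(* Let $\underline s\in\mathbb{R}$ and $f,g\in\mathcal{F}_{\underline s}$ with $f\succsim_{\mathrm w}g$. Then $\mathcal{I}^{\mathrm w}_{f,g}=\{I\in\mathcal{K}([0,1]):\ I_f\le I\le I_g,\ \partial I(X)\subseteq[\underline s,f(1)]\}$ is a convex function interval, and $\varphi\in\mathcal{F}_{\underline s}$ satisfies $f\succsim_{\mathrm w}\varphi\succsim_{\mathrm w}g$ if and only if there exists $I\in\mathcal{I}^{\mathrm w}_{f,g}$ with $I=I_\varphi$.
   Context: $X=[0,1]$, $\mathcal{F}_{\underline s}=\{f\in L^1(X): f$ non-decreasing, $f(0)\ge\underline s\}$, $m_f=\int_0^1 f$, $I_\varphi(x)=\int_0^x\varphi(s)\,\mathrm{d}s-m_\varphi$. $f\succsim_{\mathrm w}g$ means $\int_0^x f-m_f\le\int_0^x g-m_g$ for all $x\in X$. $\mathcal{K}([0,1])$ is the set of continuous convex functions, $\partial I(X)=\bigcup_{x\in(0,1)}\partial I(x)$. A convex function interval is a set $\{u\in\mathcal{K}(X):\underline u\le u\le\bar u,\ \partial u(X)\subseteq[\underline s,\bar s]\}$ with $\underline u\le\bar u$ in $\mathcal{K}(X)$ and $\partial\underline u(X),\partial\bar u(X)\subseteq[\underline s,\bar s]$. *)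

(* Defs.v *)
From Stdlib Require Import Reals.
From Coquelicot Require Import Coquelicot.
Open Scope R_scope.

Definition inX (x : R) : Prop := 0 <= x <= 1.

(* F_s : nondecreasing (on X) integrable functions with f(0) >= s.
   For nondecreasing functions on [0,1], Riemann and Lebesgue integrability
   coincide (both hold), and so do the integrals. *)
Definition Fs (s : R) (f : R -> R) : Prop :=
  (forall x y, inX x -> inX y -> x <= y -> f x <= f y) /\
  s <= f 0 /\ ex_RInt f 0 1.

Definition mean (f : R -> R) : R := RInt f 0 1.

Definition Iphi (phi : R -> R) (x : R) : R := RInt phi 0 x - mean phi.

Definition wdom (f g : R -> R) : Prop :=
  forall x, inX x -> Iphi f x <= Iphi g x.

(* K(X): continuous convex functions on [0,1] (only values on X matter). *)
Definition cont_on_X (u : R -> R) : Prop :=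
  forall x, inX x -> forall eps, 0 < eps -> exists delta, 0 < delta /\
    forall y, inX y -> Rabs (y - x) < delta -> Rabs (u y - u x) < eps.

Definition convex_on_X (u : R -> R) : Prop :=
  forall x y t, inX x -> inX y -> 0 <= t <= 1 ->
    u (t * x + (1 - t) * y) <= t * u x + (1 - t) * u y.

Definition inK (u : R -> R) : Prop := cont_on_X u /\ convex_on_X u.

Definition subgrad (u : R -> R) (x p : R) : Prop :=
  forall y, inX y -> u x + p * (y - x) <= u y.

Definition subdiff_in (u : R -> R) (a b : R) : Prop :=
  forall x p, 0 < x < 1 -> subgrad u x p -> a <= p <= b.

Definition CFI (ul ub : R -> R) (sl sb : R) (u : R -> R) : Prop :=
  inK u /\ (forall x, inX x -> ul x <= u x <= ub x) /\ subdiff_in u sl sb.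

Definition is_CFI (S : (R -> R) -> Prop) : Prop :=
  exists (ul ub : R -> R) (sl sb : R),
    inK ul /\ inK ub /\ (forall x, inX x -> ul x <= ub x) /\
    subdiff_in ul sl sb /\ subdiff_in ub sl sb /\
    forall u, S u <-> CFI ul ub sl sb u.

Definition Iw (s : R) (f g : R -> R) (I : R -> R) : Prop :=
  inK I /\ (forall x, inX x -> Iphi f x <= I x <= Iphi g x) /\
  subdiff_in I s (f 1).

(* Main.v *)
Require Import Defs.
From Stdlib Require Import Reals Lra.
From Coquelicot Require Import Coquelicot.
Open Scope R_scope.

Section H.
Variable h : R -> R.
Hypothesis hmono : forall x y, inX x -> inX y -> x <= y -> h x <= h y.
Hypothesis hint : ex_RInt h 0 1.

Lemma ex_sub a b : 0 <= a -> a <= b -> b <= 1 -> ex_RInt h a b.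
Proof.
  intros. apply (ex_RInt_Chasles_2 h 0 a b); [lra|].
  apply (ex_RInt_Chasles_1 h 0 b 1); [lra|exact hint].
Qed.

Lemma chas x y : inX x -> inX y -> x <= y ->
  RInt h 0 y - RInt h 0 x = RInt h x y.
Proof.
  unfold inX; intros. rewrite <- (RInt_Chasles h 0 x y).
  - unfold plus; simpl; ring.
  - apply ex_sub; lra.
  - apply ex_sub; lra.
Qed.

Lemma bnds a b : 0 <= a -> a <= b -> b <= 1 ->
  h a * (b - a) <= RInt h a b <= h b * (b - a).
Proof.
  intros. split.
  - replace (h a * (b - a)) with (RInt (fun _ => h a) a b).
    2:{ rewrite RInt_const. unfold scal; simpl; unfold mult; simpl; ring. }
    apply RInt_le; auto. apply ex_RInt_const. apply ex_sub; lra.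
    intros; apply hmono; unfold inX; lra.
  - replace (h b * (b - a)) with (RInt (fun _ => h b) a b).
    2:{ rewrite RInt_const. unfold scal; simpl; unfold mult; simpl; ring. }
    apply RInt_le; auto. apply ex_sub; lra. apply ex_RInt_const.
    intros; apply hmono; unfold inX; lra.
Qed.

Lemma support x y : inX x -> inX y ->
  RInt h 0 x + h x * (y - x) <= RInt h 0 y.
Proof.
  intros Hx Hy. destruct (Rle_dec x y).
  - pose proof (chas x y Hx Hy r). unfold inX in *.
    pose proof (bnds x y ltac:(lra) r ltac:(lra)). lra.
  - pose proof (chas y x Hy Hx ltac:(lra)). unfold inX in *.
    pose proof (bnds y x ltac:(lra) ltac:(lra) ltac:(lra)). nra.
Qed.

Lemma Iphi_K : inK (Iphi h).
Proof.
  split.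
  - intros x Hx eps Heps.
    set (M := Rabs (h 0) + Rabs (h 1)).
    assert (HM : 0 <= M) by (unfold M; pose proof (Rabs_pos (h 0)); pose proof (Rabs_pos (h 1)); lra).
    exists (eps / (M + 1)). split.
    { apply Rdiv_lt_0_compat; lra. }
    intros y Hy Hd.
    assert (Hb : forall z, inX z -> Rabs (h z) <= M).
    { intros z Hz. pose proof (hmono 0 z ltac:(unfold inX; lra) Hz ltac:(unfold inX in Hz; lra)).
      pose proof (hmono z 1 Hz ltac:(unfold inX; lra) ltac:(unfold inX in Hz; lra)).
      unfold M. apply Rabs_le. pose proof (Rabs_pos (h 0)); pose proof (Rabs_pos (h 1)).
      pose proof (Rle_abs (h 1)); pose proof (Rle_abs (- h 0)). rewrite Rabs_Ropp in *. lra. }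
    assert (Hlip : Rabs (Iphi h y - Iphi h x) <= M * Rabs (y - x)).
    { unfold Iphi. replace (RInt h 0 y - mean h - (RInt h 0 x - mean h)) with (RInt h 0 y - RInt h 0 x) by ring.
      pose proof (Hb x Hx) as Bx. pose proof (Hb y Hy) as By.
      apply Rabs_le_between in Bx. apply Rabs_le_between in By.
      destruct (Rle_dec x y).
      - rewrite chas; auto. unfold inX in *. pose proof (bnds x y ltac:(lra) r ltac:(lra)).
        rewrite (Rabs_right (y - x)) by lra. apply Rabs_le. nra.
      - replace (RInt h 0 y - RInt h 0 x) with (- (RInt h 0 x - RInt h 0 y)) by ring.
        rewrite Rabs_Ropp. rewrite chas; auto; try lra. unfold inX in *.
        pose proof (bnds y x ltac:(lra) ltac:(lra) ltac:(lra)).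
        rewrite (Rabs_left (y - x)) by lra. apply Rabs_le. nra. }
    assert (M * Rabs (y - x) <= M * (eps / (M+1))).
    { apply Rmult_le_compat_l; lra. }
    assert (M * (eps / (M+1)) < eps).
    { unfold Rdiv. rewrite <- Rmult_assoc.
      apply (Rmult_lt_reg_r (M+1)); [lra|]. rewrite Rmult_assoc, Rinv_l by lra. nra. }
    lra.
  - intros x y t Hx Hy Ht. unfold Iphi.
    set (z := t * x + (1 - t) * y).
    assert (Hz : inX z) by (unfold z, inX in *; nra).
    pose proof (support z x Hz Hx). pose proof (support z y Hz Hy).
    assert (t * (RInt h 0 z + h z * (x - z)) + (1-t) * (RInt h 0 z + h z * (y - z))
            <= t * RInt h 0 x + (1-t) * RInt h 0 y) by nra.
    assert (t * (RInt h 0 z + h z * (x - z)) + (1-t) * (RInt h 0 z + h z * (y - z))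
            = RInt h 0 z) by (unfold z; ring).
    nra.
Qed.

Lemma sub_lower x p : 0 < x < 1 -> subgrad (Iphi h) x p -> h 0 <= p.
Proof.
  intros Hx Hs. specialize (Hs 0 ltac:(unfold inX; lra)). unfold Iphi in Hs.
  pose proof (chas 0 x ltac:(unfold inX; lra) ltac:(unfold inX; lra) ltac:(lra)).
  pose proof (bnds 0 x ltac:(lra) ltac:(lra) ltac:(lra)).
  assert (RInt h 0 0 = 0) by (rewrite RInt_point; reflexivity).
  nra.
Qed.

Lemma sub_upper x p y : 0 < x < 1 -> subgrad (Iphi h) x p -> x < y <= 1 -> p <= h y.
Proof.
  intros Hx Hs Hy. specialize (Hs y ltac:(unfold inX; lra)). unfold Iphi in Hs.
  pose proof (chas x y ltac:(unfold inX; lra) ltac:(unfold inX; lra) ltac:(lra)).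
  pose proof (bnds x y ltac:(lra) ltac:(lra) ltac:(lra)).
  nra.
Qed.

End H.

Lemma wdom_bound f h y : Fs 0 f -> Fs 0 h -> wdom f h -> 0 <= y < 1 -> h y <= f 1.
Abort.

Lemma wdom_bound s f h y : Fs s f -> Fs s h -> wdom f h -> 0 <= y < 1 -> h y <= f 1.
Proof.
  intros [fm [_ fi]] [hm [_ hi]] W Hy. specialize (W y ltac:(unfold inX; lra)).
  unfold Iphi, mean in W.
  assert (E1 := chas f fi y 1 ltac:(unfold inX; lra) ltac:(unfold inX; lra) ltac:(lra)).
  assert (E2 := chas h hi y 1 ltac:(unfold inX; lra) ltac:(unfold inX; lra) ltac:(lra)).
  pose proof (bnds f fm fi y 1 ltac:(lra) ltac:(lra) ltac:(lra)).
  pose proof (bnds h hm hi y 1 ltac:(lra) ltac:(lra) ltac:(lra)).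
  nra.
Qed.

Lemma subd s f h : Fs s f -> Fs s h -> wdom f h -> subdiff_in (Iphi h) s (f 1).
Proof.
  intros Hf Hh W x p Hx Hs. pose proof Hh as [hm [hs hi]]. split.
  - pose proof (sub_lower h hm hi x p Hx Hs). lra.
  - set (y := (x + 1) / 2).
    pose proof (sub_upper h hm hi x p y Hx Hs ltac:(unfold y; lra)).
    pose proof (wdom_bound s f h y Hf Hh W ltac:(unfold y; lra)). lra.
Qed.

Theorem lemma4 (s : R) (f g : R -> R) :
  Fs s f -> Fs s g -> wdom f g ->
  is_CFI (Iw s f g) /\
  (forall phi : R -> R, Fs s phi ->
     ((wdom f phi /\ wdom phi g) <->
      exists I : R -> R, Iw s f g I /\ (forall x, inX x -> I x = Iphi phi x))).
Proof.
  intros Hf Hg W.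
  assert (Wff : wdom f f) by (intros x _; lra).
  split.
  - exists (Iphi f), (Iphi g), s, (f 1).
    destruct Hf as [fm [fs fi]]. destruct Hg as [gm [gs gi]].
    split; [apply Iphi_K; auto|].
    split; [apply Iphi_K; auto|].
    split; [exact W|].
    split; [apply subd; auto; repeat split; auto|].
    split; [apply subd; auto; repeat split; auto|].
    intros u; unfold Iw, CFI; tauto.
  - intros phi Hp. split.
    + intros [W1 W2]. exists (Iphi phi). split; [|auto].
      pose proof Hp as [pm [ps pi]].
      split; [apply Iphi_K; auto|].
      split; [intros x Hx; split; auto|].
      apply subd; auto.
    + intros [I [[_ [HB _]] HE]]. split.
      * intros x Hx. rewrite <- HE by auto. apply HB; auto.
      * intros x Hx. rewrite <- HE by auto. apply HB; auto.
Qed.
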